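(* Let $I,J\ge 2$ and let $m_A=(m_{A,1},\dots,m_{A,I})$, $m_B=(m_{B,1},\dots,m_{B,J})$ be vectors of positive integers with $\sum_i m_{A,i}=\sum_j m_{B,j}=I+J-1$. Then the number of saturated fractions $\mathcal F\subseteq[I]\times[J]$ with margins $m_A$ and $m_B$ is $$\binom{I-1}{m_{B,1}-1,\ \dots,\ m_{B,J}-1}\binom{J-1}{m_{A,1}-1,\ \dots,\ m_{A,I}-1},$$ where $\binom{n}{k_1,\dots,k_r}=\frac{n!}{k_1!\cdots k_r!}$ denotes the multinomial coefficient.
   Context: For a fraction $\mathcal F\subseteq[I]\times[J]$, its margins are $m_{A,i}=\#\{(d_1,d_2)\in\mathcal F: d_1=i\}$ and $m_{B,j}=\#\{(d_1,d_2)\in\mathcal F: d_2=j\}$. For $(i,j)\in[I]\times[J]$ let $r_{(i,j)}\in\mathbb R^{I+J-1}$ be the row vector $(1,a_1,\dots,a_{I-1},b_1,\dots,b_{J-1})$ with $a_s=1$ iff $s=i$ and $b_t=1$ iff $t=j$ (all other entries $0$); $X_{\mathcal F}$ is the matrix with rows $r_{(i,j)}$, $(i,j)\in\mathcal F$. $\mathcal F$ is saturated if $\#\mathcal F=I+J-1$ and $X_{\mathcal F}$ is non-singular. *)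

(* Defs.v *)
From HB Require Import structures.
From mathcomp Require Import all_boot all_order all_algebra.
Set Implicit Arguments. Unset Strict Implicit. Unset Printing Implicit Defensive.
Import Order.TTheory GRing.Theory Num.Theory.

Local Open Scope ring_scope.

(* Indices are 0-based: paper's level i in [I] is the ordinal i : 'I_I with
   value i-1.  The row vector r_(i,j) in R^(I+J-1) (0-based positions):
   position 0 holds 1; position s (1 <= s <= I-1) holds a_s = [s = i_paper];
   position I-1+t (1 <= t <= J-1) holds b_t = [t = j_paper]. *)
Definition design_row (I J : nat) (i : 'I_I) (j : 'I_J) : 'rV[rat]_(I + J - 1) :=
  \row_(k < I + J - 1)
    (if val k == 0%N then 1
     else if (val k < I)%N then ((val k == i.+1)%N)%:R
     else ((val k == I + j)%N)%:R).

(* It is only used when #F = I+J-1, in which case it is exactly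
   the square matrix X_F (row order is irrelevant for non-singularity). *)
Definition design_matrix (I J : nat) (F : {set 'I_I * 'I_J}) :
    'M[rat]_(I + J - 1) :=
  \matrix_(k < I + J - 1, l < I + J - 1)
     (nth 0 [seq design_row p.1 p.2 | p <- enum F] k) 0 l.

Definition saturated (I J : nat) (F : {set 'I_I * 'I_J}) : bool :=
  (#|F| == I + J - 1)%N && (design_matrix F \in unitmx).

Definition marginA (I J : nat) (F : {set 'I_I * 'I_J}) (i : 'I_I) : nat :=
  #|[set p in F | p.1 == i]|.
Definition marginB (I J : nat) (F : {set 'I_I * 'I_J}) (j : 'I_J) : nat :=
  #|[set p in F | p.2 == j]|.

Definition multinomial (n : nat) (ks : seq nat) : nat :=
  (n`! %/ \prod_(k <- ks) k`!)%N.

(* Main.v *)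
Require Import Defs.
From mathcomp Require Import all_boot all_order all_algebra.
From mathcomp Require Import zify ring.
Set Implicit Arguments. Unset Strict Implicit. Unset Printing Implicit Defensive.

Definition closedAB I J (F : {set 'I_I * 'I_J}) (A : {set 'I_I}) (B : {set 'I_J}) :=
  [forall p in F, (p.1 \in A) == (p.2 \in B)].
Definition conn I J (R : {set 'I_I}) (C : {set 'I_J}) (F : {set 'I_I * 'I_J}) :=
  [forall A : {set 'I_I}, forall B : {set 'I_J},
     [&& A \subset R, B \subset C & closedAB F A B] ==>
     ((A == set0) && (B == set0)) || ((A == R) && (B == C))].
Definition good I J (R : {set 'I_I}) (C : {set 'I_J}) (dA : 'I_I -> nat) (dB : 'I_J -> nat)
   (F : {set 'I_I * 'I_J}) :=
  [&& F \subset setX R C, conn R C F,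
      [forall i in R, marginA F i == dA i] & [forall j in C, marginB F j == dB j]].
Definition cnt I J (R : {set 'I_I}) (C : {set 'I_J}) dA dB :=
  #|[set F | good R C dA dB F]|.
Definition PF I (R : {set 'I_I}) (d : 'I_I -> nat) := (\prod_(i in R) (d i).-1`!)%N.

Lemma card_sepU1 (T : finType) (e : T) (A : {set T}) (P : pred T) :
  e \notin A -> #|[set p in e |: A | P p]| = (P e + #|[set p in A | P p]|)%N.
Proof.
move=> eA; case Pe: (P e).
  have -> : [set p in e |: A | P p] = e |: [set p in A | P p].
    by apply/setP => p; rewrite !inE; case: eqP => // ->; rewrite Pe.
  by rewrite cardsU1 inE (negbTE eA).
have -> // : [set p in e |: A | P p] = [set p in A | P p].
by apply/setP => p; rewrite !inE; case: eqP => // ->; rewrite Pe (negbTE eA).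
Qed.

Lemma marginA_U1 I J (F : {set 'I_I * 'I_J}) e k : e \notin F ->
  marginA (e |: F) k = ((e.1 == k) + marginA F k)%N.
Proof. exact: card_sepU1. Qed.
Lemma marginB_U1 I J (F : {set 'I_I * 'I_J}) e k : e \notin F ->
  marginB (e |: F) k = ((e.2 == k) + marginB F k)%N.
Proof. exact: card_sepU1. Qed.

Definition swp I J (p : 'I_I * 'I_J) : 'I_J * 'I_I := (p.2, p.1).
Lemma swpK I J : cancel (@swp I J) (@swp J I). Proof. by case. Qed.
Lemma swp_inj I J : injective (@swp I J). Proof. exact: can_inj (@swpK I J). Qed.
Definition trF I J (F : {set 'I_I * 'I_J}) : {set 'I_J * 'I_I} := (@swp I J) @: F.
Lemma mem_trF I J (F : {set 'I_I * 'I_J}) q : (q \in trF F) = (swp q \in F).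
Proof.
apply/imsetP/idP => [[p pF ->]| qF]; first by rewrite swpK.
by exists (swp q) => //; rewrite swpK.
Qed.
Lemma trFK I J : cancel (@trF I J) (@trF J I).
Proof. by move=> F; apply/setP => p; rewrite !mem_trF swpK. Qed.

Lemma marginA_tr I J (F : {set 'I_I * 'I_J}) j : marginA (trF F) j = marginB F j.
Proof.
rewrite /marginA /marginB -(card_imset _ (@swp_inj I J)).
have -> // : [set q in trF F | q.1 == j] = (@swp I J) @: [set p in F | p.2 == j].
apply/setP => q; rewrite !inE mem_trF.
apply/andP/imsetP => [[qF e]|[p]]; first by exists (swp q); rewrite ?inE ?qF ?swpK.
by rewrite inE => /andP[pF e] ->; rewrite swpK.
Qed.
Lemma marginB_tr I J (F : {set 'I_I * 'I_J}) i : marginB (trF F) i = marginA F i.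
Proof. by rewrite -{2}(trFK F) marginA_tr. Qed.

Lemma good_tr I J R C dA dB (F : {set 'I_I * 'I_J}) :
  good R C dA dB F -> good C R dB dA (trF F).
Proof.
case/and4P=> sF cF mA mB; apply/and4P; split.
- apply/subsetP => q; rewrite mem_trF => /(subsetP sF); case: q => a b.
  by rewrite !inE andbC.
- apply/forallP => B; apply/forallP => A; apply/implyP => /and3P[sB sA clF].
  have := forallP (forallP cF A) B; rewrite sA sB /=.
  have -> : closedAB F A B.
    apply/forallP => p; apply/implyP => pF.
    have := forallP clF (swp p); rewrite mem_trF swpK pF /= eq_sym.
    by [].
  by rewrite /= => /orP[/andP[-> ->]|/andP[-> ->]]; rewrite ?orbT.
- by apply/forallP => j; apply/implyP => jC; rewrite marginA_tr (forall_inP mB).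
- by apply/forallP => i; apply/implyP => iR; rewrite marginB_tr (forall_inP mA).
Qed.

Lemma cnt_tr I J R C dA dB : @cnt I J R C dA dB = cnt C R dB dA.
Proof.
rewrite /cnt -(card_imset _ (can_inj (@trFK I J))).
have -> // : [set F | good C R dB dA F] = (@trF I J) @: [set F | good R C dA dB F].
apply/setP => G; rewrite inE; apply/idP/imsetP => [gG|[F]].
  by exists (trF G); rewrite ?inE ?trFK // good_tr.
by rewrite inE => /good_tr gF ->.
Qed.

Definition dec J (dB : 'I_J -> nat) j := fun k => if k == j then (dB j).-1 else dB k.

Lemma card1_uniq (T : finType) (A : {set T}) x y : #|A| = 1%N -> x \in A -> y \in A -> x = y.
Proof.
move/eqP/cards1P => [z ->]; rewrite !inE => /eqP -> /eqP -> //.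
Qed.

Section Leaf.
Variables (I J : nat) (R : {set 'I_I}) (C : {set 'I_J}) (dA : 'I_I -> nat) (dB : 'I_J -> nat).
Variable i : 'I_I.
Hypothesis iR : i \in R.
Hypothesis dAi : dA i = 1%N.

Lemma leaf_uniq F j p : good R C dA dB F -> (i, j) \in F -> p \in F -> p.1 = i -> p = (i, j).
Proof.
case/and4P=> _ _ /forall_inP mA _ ijF pF p1.
apply: (@card1_uniq _ [set p in F | p.1 == i]).
- by have := eqP (mA i iR); rewrite /marginA dAi.
- by rewrite inE pF p1 eqxx.
- by rewrite inE ijF eqxx.
Qed.

Lemma leaf_exists F : good R C dA dB F -> exists2 j, j \in C & (i, j) \in F.
Proof.
move=> gF; case/and4P: (gF) => sF _ /forall_inP mA _.
have : #|[set p in F | p.1 == i]| == 1%N by have := eqP (mA i iR); rewrite /marginA dAi => ->.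
case/cards1P => x ex.
have : x \in [set p in F | p.1 == i] by rewrite ex inE.
rewrite inE => /andP[xF /eqP x1].
have := subsetP sF x xF; rewrite inE => /andP[_ x2].
by exists x.2 => //; rewrite -x1; case: x xF {ex x1 x2}.
Qed.

Lemma leaf_remove F j : (2 <= #|R|)%N -> good R C dA dB F -> (i, j) \in F ->
  (2 <= dB j)%N /\ good (R :\ i) C dA (dec dB j) (F :\ (i, j)).
Proof.
move=> R2 gF ijF; have U := leaf_uniq gF ijF.
case/and4P: (gF) => sF cF /forall_inP mA /forall_inP mB.
have jC : j \in C by have := subsetP sF _ ijF; rewrite inE => /andP[].
have mF : forall k, marginB F k = ((j == k) + marginB (F :\ (i,j)) k)%N.
  by move=> k; rewrite -{1}(setD1K ijF) marginB_U1 ?setD11.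
have mFA : forall k, marginA F k = ((i == k) + marginA (F :\ (i,j)) k)%N.
  by move=> k; rewrite -{1}(setD1K ijF) marginA_U1 ?setD11.
have db2 : (2 <= dB j)%N.
  rewrite leqNgt; apply/negP => db1.
  have dbj1 : dB j = 1%N.
    have := mF j; rewrite eqxx (eqP (mB j jC)); lia.
  have cl : closedAB F [set i] [set j].
    apply/forall_inP => p pF; rewrite !inE.
    apply/eqP; apply/idP/idP => [/eqP p1|/eqP p2].
      by rewrite (U p pF p1).
    apply/eqP; suff -> : p = (i, j) by [].
    apply: (@card1_uniq _ [set p in F | p.2 == j]).
    + by have := eqP (mB j jC); rewrite /marginB dbj1.
    + by rewrite inE pF p2 eqxx.
    + by rewrite inE ijF eqxx.
  have := forallP (forallP cF [set i]) [set j].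
  rewrite cl sub1set iR sub1set jC /= => /orP[/andP[/eqP e _]|/andP[/eqP e _]].
    by have := set11 i; rewrite e inE.
  by move: R2; rewrite -e cards1.
split=> //; apply/and4P; split.
- apply/subsetP => p; rewrite !inE => /andP[pij pF].
  have := subsetP sF p pF; rewrite inE => /andP[-> ->]; rewrite andbT.
  by rewrite andbT; apply/eqP => p1; move: pij; rewrite (U p pF p1) eqxx.

- apply/forallP => A; apply/forallP => B; apply/implyP => /and3P[sA sB cl].
  have iA : i \notin A by apply/negP => /(subsetP sA); rewrite !inE eqxx.
  have clF : forall A' : {set 'I_I}, (forall p, p \in F -> p.1 != i -> (p.1 \in A') = (p.1 \in A)) ->
        (i \in A') = (j \in B) -> closedAB F A' B.
    move=> A' h hi; apply/forall_inP => p pF.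
    case: (p =P (i, j)) => [-> //|pij]; first by rewrite hi.
    have p1 : p.1 != i by apply/eqP => /(U p pF).
    rewrite h //; have := forall_inP cl p; rewrite !inE pF; apply.
    by rewrite andbT; apply/eqP.
  case jB : (j \in B).
  + have := forallP (forallP cF (i |: A)) B.
    have clF' : closedAB F (i |: A) B.
      by apply: clF => [p _ /negbTE p1|]; rewrite !inE ?p1 ?eqxx ?jB.
    rewrite clF'.
    have sA' : i |: A \subset R by rewrite subUset sub1set iR (subset_trans sA) // subsetDl.
    rewrite sA' (subset_trans sB) //= => /orP[/andP[/eqP e _]|/andP[/eqP e /eqP ->]].
      by have := setU11 i A; rewrite e inE.
    by rewrite -e setU1K // !eqxx orbT.
  + have := forallP (forallP cF A) B.
    rewrite clF ?jB ?(negbTE iA) //.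
    rewrite (subset_trans sA) ?subsetDl //= sB /=.
    by move=> /orP[/andP[-> ->]//|/andP[/eqP e _]]; move: iA; rewrite e iR.
- apply/forall_inP => k; rewrite !inE => /andP[ki kR].
  by have := mFA k; rewrite (eqP (mA k kR)) eq_sym (negbTE ki) => ->.
- apply/forall_inP => k kC; have := mF k; rewrite (eqP (mB k kC)) /dec.
  case: eqP => [->|/eqP kj]; rewrite ?eqxx /=; first lia.
  have kj2 : (k == j) = false by rewrite eq_sym; apply/negbTE.
  by rewrite kj2 => ->.
Qed.

Lemma leaf_add F' j : j \in C -> (0 < dB j)%N -> good (R :\ i) C dA (dec dB j) F' ->
  (i, j) \notin F' /\ good R C dA dB ((i, j) |: F').
Proof.
move=> jC dbj /and4P[sF cF /forall_inP mA /forall_inP mB].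
have nF : forall p, p \in F' -> p.1 != i.
  by move=> p /(subsetP sF); rewrite !inE => /andP[/andP[]].
have ijn : (i, j) \notin F' by apply/negP => /nF; rewrite eqxx.
split=> //; apply/and4P; split.
- apply/subsetP => p; rewrite in_setU1 => /orP[/eqP ->|/(subsetP sF)]; rewrite !inE ?iR ?jC //.
  by case/andP=> /andP[_ ->] ->.
- rewrite /conn; apply/forallP => A; apply/forallP => B; apply/implyP => /and3P[sA sB cl].
  have clF : closedAB F' (A :\ i) B.
    apply/forall_inP => p pF; rewrite !inE (nF p pF) /=.
    by apply: (forall_inP cl); rewrite inE pF orbT.
  have ije := forall_inP cl (i, j) (setU11 _ _); rewrite /= in ije.
  have := forallP (forallP cF (A :\ i)) B.
  rewrite clF sB setSD //= => /orP[/andP[/eqP e /eqP eB]|/andP[/eqP e /eqP eB]].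
    apply/orP; left; rewrite eB eqxx andbT; apply/eqP/setP => x; rewrite inE.
    case: (x =P i) => [->|/eqP xi]; first by rewrite (eqP ije) eB inE.
    by move/setP: e => /(_ x); rewrite !inE xi.
  apply/orP; right; rewrite eB eqxx andbT; apply/eqP/setP => x.
  case: (x =P i) => [->|/eqP xi]; first by rewrite (eqP ije) eB jC iR.
  by move/setP: e => /(_ x); rewrite !inE xi.
- apply/forall_inP => k kR; rewrite marginA_U1 //=.
  case: (i =P k) => [<-|/eqP ik].
    rewrite dAi; suff -> : marginA F' i = 0%N by [].
    apply/eqP; rewrite cards_eq0; apply/eqP/setP => p; rewrite !inE.
    by apply/negP => /andP[/nF /negbTE ->].
  have kR' : k \in R :\ i by rewrite !inE eq_sym ik.
  by rewrite (eqP (mA k kR')).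
- apply/forall_inP => k kC; rewrite marginB_U1 //= (eqP (mB k kC)) /dec.
  case: (k =P j) => [->|/eqP kj]; rewrite ?eqxx /=; first by apply/eqP; lia.
  by rewrite (negbTE (_ : j != k)) // eq_sym.
Qed.

End Leaf.

Lemma sum_pred (T : finType) (C : {set T}) (d : T -> nat) :
  (forall j, j \in C -> 0 < d j)%N ->
  (\sum_(j in C) (d j).-1 + #|C| = \sum_(j in C) d j)%N.
Proof.
move=> pos; rewrite -sum1_card -big_split /=; apply: eq_bigr => j jC.
by rewrite addn1 prednK // pos.
Qed.

Lemma row_step I J (R : {set 'I_I}) (C : {set 'I_J}) dA dB i :
  i \in R -> dA i = 1%N -> (2 <= #|R|)%N ->
  (forall j, j \in C -> 0 < dB j)%N ->
  (\sum_(j in C) dB j = #|R| + #|C| - 1)%N ->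
  (forall j, j \in C -> (2 <= dB j)%N ->
     cnt (R :\ i) C dA (dec dB j) * PF (R :\ i) dA * PF C (dec dB j)
       = (#|C| - 1)`! * (#|R :\ i| - 1)`!)%N ->
  (cnt R C dA dB * PF R dA * PF C dB = (#|C| - 1)`! * (#|R| - 1)`!)%N.
Proof.
move=> iR dAi R2 posB sB IH.
set S := [set F | good R C dA dB F].
have cS : cnt R C dA dB = (\sum_(j in C) #|[set F in S | (i, j) \in F]|)%N.
  rewrite /cnt -/S.
  transitivity (\sum_(F in S) \sum_(j in C) ((i, j) \in F : nat))%N.
    rewrite -sum1_card; apply: eq_bigr => F; rewrite inE => gF.
    have [j0 j0C ij0] := leaf_exists iR dAi gF.
    rewrite (bigD1 j0) //= ij0 big1 // => j /andP[_ jj0].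
    apply/eqP; rewrite eqb0; apply/negP => ijF.
    by have := leaf_uniq iR dAi gF ij0 ijF erefl => -[] /eqP; rewrite (negbTE jj0).

  rewrite (exchange_big_dep xpredT) /=; last by [].
  rewrite [RHS]big_mkcond; apply: eq_bigr => j _; case: (boolP (j \in C)) => jC; last first.
    by rewrite big1 // => F /andP[_ /negP].
  rewrite -sum1_card [RHS]big_mkcond [LHS]big_mkcond; apply: eq_bigr => F _.
  by rewrite [in RHS]inE; case: (F \in S); case: ((i, j) \in F).
have K : forall j, j \in C ->
    (#|[set F in S | (i, j) \in F]| * PF R dA * PF C dB =
     (dB j).-1 * ((#|C| - 1)`! * (#|R| - 2)`!))%N.
  move=> j jC.
  have [db2|] := leqP 2 (dB j); last first.
    move=> db1; have -> : [set F in S | (i, j) \in F] = set0.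
      apply/setP => F; rewrite !inE; apply/negP => /andP[gF ijF].
      by have [] := leaf_remove iR dAi R2 gF ijF; lia.
    by rewrite cards0 (_ : (dB j).-1 = 0%N) //; lia.
  have -> : [set F in S | (i, j) \in F] =
      (fun F' => (i, j) |: F') @: [set F' | good (R :\ i) C dA (dec dB j) F'].
    apply/setP => F; rewrite !inE; apply/andP/imsetP => [[gF ijF]|[F']].
      have [_ g'] := leaf_remove iR dAi R2 gF ijF.
      by exists (F :\ (i, j)); rewrite ?inE ?setD1K.
    rewrite inE => g' ->; have [_ gF] := leaf_add iR dAi jC (posB j jC) g'.
    by rewrite gF setU11.
  rewrite card_in_imset; last first.
    move=> F1 F2; rewrite !inE => g1 g2 e.
    have [n1 _] := leaf_add iR dAi jC (posB j jC) g1.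
    have [n2 _] := leaf_add iR dAi jC (posB j jC) g2.
    by rewrite -(setU1K n1) e setU1K.
  have ePA : PF R dA = PF (R :\ i) dA.
    rewrite /PF (bigD1 i) //= dAi mul1n; apply: eq_bigl => k.
    by rewrite !inE andbC.
  have ePB : PF C dB = ((dB j).-1 * PF C (dec dB j))%N.
    rewrite /PF (bigD1 j) //= [in RHS](bigD1 j) //= mulnA.
    congr (_ * _)%N; last first.
      by apply: eq_bigr => k /andP[_ kj]; rewrite /dec (negbTE kj).
    rewrite /dec eqxx; case: (dB j) db2 => [|[|k]] //= _; rewrite factS.
  have := IH j jC db2; rewrite -/(cnt _ _ _ _) ePA ePB.
  have -> : (#|R :\ i| - 1 = #|R| - 2)%N by rewrite (cardsD1 i R) iR; lia.
  move=> <-; rewrite /cnt; ring.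
rewrite cS big_distrl big_distrl /=.
rewrite (eq_bigr _ K) -big_distrl /=.
have := sum_pred posB; rewrite sB => hs.
have -> : (\sum_(j in C) (dB j).-1 = #|R| - 1)%N by lia.
have -> : (#|R| - 1 = (#|R| - 2).+1)%N by lia.
rewrite factS; ring.
Qed.

Definition Hyp I J (R : {set 'I_I}) (C : {set 'I_J}) dA dB :=
  [/\ (0 < #|R|)%N, (0 < #|C|)%N, (forall i, i \in R -> (0 < dA i)%N),
      (forall j, j \in C -> (0 < dB j)%N) &
      ((\sum_(i in R) dA i = #|R| + #|C| - 1)%N /\ (\sum_(j in C) dB j = #|R| + #|C| - 1)%N)].

Definition Concl I J (R : {set 'I_I}) (C : {set 'I_J}) dA dB :=
  (cnt R C dA dB * PF R dA * PF C dB = (#|C| - 1)`! * (#|R| - 1)`!)%N.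

Lemma leaf_case n I J (R : {set 'I_I}) (C : {set 'I_J}) dA dB i :
  (forall I J (R : {set 'I_I}) (C : {set 'I_J}) dA dB,
      (#|R| + #|C| <= n)%N -> Hyp R C dA dB -> Concl R C dA dB) ->
  (#|R| + #|C| <= n.+1)%N -> Hyp R C dA dB -> i \in R -> dA i = 1%N -> (2 <= #|R|)%N ->
  Concl R C dA dB.
Proof.
move=> IH len [R0 C0 pA pB [sA sB]] iR dAi R2.
apply: (row_step iR dAi R2 pB) => [|j jC db2]; first by rewrite sB.
have cR : #|R| = (#|R :\ i|).+1 by rewrite (cardsD1 i R) iR.
apply: IH; first lia.
split.
- lia.
- done.
- by move=> k; rewrite !inE => /andP[_ /pA].
- by move=> k kC; rewrite /dec; case: eqP => [_|_]; [lia|apply: pB].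
split.
- have h2 : \sum_(k in R) dA k = (dA i + \sum_(k in R :\ i) dA k)%N.
    rewrite (bigD1 i) //=; congr (_ + _)%N; apply: eq_bigl => k; by rewrite !inE andbC.
  lia.
- have h2 : \sum_(k in C) dB k = (dB j + \sum_(k in C | k != j) dB k)%N by rewrite (bigD1 j).
  have h3 : \sum_(k in C) dec dB j k = ((dB j).-1 + \sum_(k in C | k != j) dB k)%N.
    rewrite (bigD1 j) //= {1}/dec eqxx; congr (_ + _)%N.
    by apply: eq_bigr => k /andP[_ kj]; rewrite /dec (negbTE kj).
  lia.
Qed.

Lemma sum_ge2 (T : finType) (C : {set T}) (d : T -> nat) :
  (forall j, j \in C -> 2 <= d j)%N -> (2 * #|C| <= \sum_(j in C) d j)%N.
Proof.
move=> h; rewrite mulnC -sum_nat_const; exact: leq_sum.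
Qed.

Lemma base_case I J (R : {set 'I_I}) (C : {set 'I_J}) dA dB :
  #|R| = 1%N -> #|C| = 1%N -> Hyp R C dA dB -> Concl R C dA dB.
Proof.
move=> /eqP/cards1P[i ->] /eqP/cards1P[j ->] [_ _ pA pB []].
rewrite !big_set1 !cards1 /= => dAi dBj.
have e1 : setX [set i] [set j] = [set (i, j)].
  by apply/setP => -[a b]; rewrite !inE xpair_eqE.
have gE : [set F | good [set i] [set j] dA dB F] = [set [set (i, j)]].
  apply/setP => F; rewrite !inE; apply/idP/idP => [/and4P[sF _ mA _]|/eqP ->].
    move: sF; rewrite e1 subset1 => /orP[//|/eqP F0].
    have := forall_inP mA i (set11 i); rewrite F0 dAi /marginA.
    by rewrite (_ : [set p in set0 | p.1 == i] = set0) ?cards0 // -setP => p; rewrite !inE.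
  have m1 : forall P : pred ('I_I * 'I_J), P (i, j) -> #|[set p in [set (i, j)] | P p]| = 1%N.
    move=> P Pij; rewrite (_ : [set p in [set (i, j)] | P p] = [set (i, j)]) ?cards1 //.
    by apply/setP => p; rewrite !inE; case: eqP => // ->.
  apply/and4P; split.
  - by rewrite e1.
  - apply/forallP => A; apply/forallP => B; apply/implyP => /and3P[sA sB cl].
    have := forall_inP cl (i, j) (set11 _); rewrite /=.
    move: sA sB; rewrite !subset1 => /orP[]/eqP-> /orP[]/eqP->; rewrite ?inE ?eqxx //=.
    by rewrite orbT.
  - by apply/forall_inP => k; rewrite inE => /eqP ->; rewrite /marginA m1 ?dAi //=.
  - by apply/forall_inP => k; rewrite inE => /eqP ->; rewrite /marginB m1 ?dBj //=.
by rewrite /Concl /cnt gE /PF !big_set1 !cards1 dAi dBj.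
Qed.

Lemma Hyp_tr I J (R : {set 'I_I}) (C : {set 'I_J}) dA dB :
  Hyp R C dA dB -> Hyp C R dB dA.
Proof. by case=> a b c d [e f]; split=> //; split; rewrite ?e ?f addnC. Qed.

Lemma arith_contra (a b r c : nat) : ((2 <= r) -> 2 * r <= a) -> ((2 <= c) -> 2 * c <= b) -> a = r + c - 1 -> b = r + c - 1 -> ~~ ((r == 1) && (c == 1)) -> 0 < r -> 0 < c -> False.
Proof.
move=> hr hc sA sB n11 R0 C0.
move: n11; case: (leqP 2 r) => R2; case: (leqP 2 c) => C2.
- have := hr R2; have := hc C2. lia.
- have := hr R2. lia.
- have := hc C2. lia.
- have -> : r = 1 by lia.
  have -> : c = 1 by lia.
  by [].
Qed.

Lemma main_count n : forall I J (R : {set 'I_I}) (C : {set 'I_J}) dA dB,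
  (#|R| + #|C| <= n)%N -> Hyp R C dA dB -> Concl R C dA dB.
Proof.
elim: n => [|n IH] I J R C dA dB len H.
  by case: H => R0 C0 _ _ _; lia.
have [/andP[/eqP r1 /eqP c1]|n11] := boolP ((#|R| == 1%N) && (#|C| == 1%N)).
  exact: base_case.
case: (boolP [exists i in R, (dA i == 1%N) && (2 <= #|R|)%N]) =>
    [/exists_inP [i iR /andP[/eqP dAi R2]] | noRow].
  exact: leaf_case IH len H iR dAi R2.
case: (boolP [exists j in C, (dB j == 1%N) && (2 <= #|C|)%N]) =>
    [/exists_inP [j jC /andP[/eqP dBj C2]] | noCol].
  have len' : (#|C| + #|R| <= n.+1)%N by lia.
  have := leaf_case IH len' (Hyp_tr H) jC dBj C2.
  rewrite /Concl cnt_tr => h; rewrite [RHS]mulnC -h; by rewrite mulnAC.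
case: H => R0 C0 pA pB [sA sB].
have hr : (2 <= #|R|)%N -> (2 * #|R| <= \sum_(i in R) dA i)%N.
  move=> R2; apply: sum_ge2 => i iR; have := pA i iR.
  case: (dA i =P 1%N) => [e|]; last by case: (dA i) => [|[|]].
  by move: noRow => /exists_inP; case; exists i => //; rewrite e eqxx R2.
have hc : (2 <= #|C|)%N -> (2 * #|C| <= \sum_(j in C) dB j)%N.
  move=> C2; apply: sum_ge2 => j jC; have := pB j jC.
  case: (dB j =P 1%N) => [e|]; last by case: (dB j) => [|[|]].
  by move: noCol => /exists_inP; case; exists j => //; rewrite e eqxx C2.
exfalso; move: hr hc sA sB n11 R0 C0.
move: (\sum_(i in R) dA i) (\sum_(j in C) dB j) #|R| #|C| => a b r c.
exact: arith_contra.
Qed.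

Module LinM.
Import GRing.Theory.
Local Open Scope ring_scope.

Lemma unit_ker m (A : 'M[rat]_m) :
  (A \in unitmx) <-> (forall v : 'cV_m, A *m v = 0 -> v = 0).
Proof.
split => [Au v Av|h].
  by rewrite -(mulKmx Au v) Av mulmx0.
rewrite unitmxE unitfE -det_tr; apply/negP => /det0P[w w0 wA].
have : A *m w^T = 0 by rewrite -(trmxK A) -trmx_mul wA trmx0.
move/h => /(congr1 trmx); rewrite trmxK trmx0 => e.
by move: w0; rewrite e eqxx.
Qed.

Section Lin.
Variables (I J : nat).
Hypothesis hI : (0 < I)%N.
Hypothesis hJ : (0 < J)%N.
Local Notation n := (I + J - 1)%N.

Definition gg (v : 'cV[rat]_n) (l : nat) : rat := \sum_(k < n) ((val k == l)%:R * v k 0).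

Lemma gg_val v (k : 'I_n) : gg v (val k) = v k 0.
Proof.
rewrite /gg (bigD1 k) //= eqxx mul1r big1 ?addr0 // => k' kk.
by rewrite (_ : (val k' == val k) = false) ?mul0r //; apply/negbTE.
Qed.

Lemma gg_out v l : (n <= l)%N -> gg v l = 0.
Proof.
move=> hl; rewrite /gg big1 // => k _.
by rewrite (_ : (val k == l) = false) ?mul0r //; apply/negbTE; rewrite neq_ltn (leq_trans (ltn_ord k) hl).
Qed.

Lemma drowE (i : 'I_I) (j : 'I_J) (k : 'I_n) :
  design_row i j 0 k = (val k == 0%N)%:R + ((i.+1 < I)%N%:R * (val k == i.+1)%:R)
                       + (val k == I + j)%N%:R.
Proof.
rewrite mxE; set m := val k.
have hi := ltn_ord i.
case: (m =P 0%N) => [m0|m0].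
  have e1 : (m == i.+1) = false by apply/negbTE/eqP; rewrite m0.
  have e2 : (m == I + j)%N = false by apply/negbTE/eqP; rewrite m0; clear -hI; lia.
  by rewrite e1 e2 mulr0 !addr0.
rewrite add0r; case: ltnP => mI.
  have e2 : (m == I + j)%N = false by apply/negbTE/eqP => e; move: mI; rewrite e; clear; lia.
  rewrite e2 addr0.
  case: (m =P i.+1) => [e|e]; last by rewrite mulr0.
  have e3 : (i.+1 < I)%N = true by rewrite -e.
  by rewrite e3 mulr1.
case: (m =P i.+1) => [e|e]; last by rewrite mulr0 add0r.
have e3 : (i.+1 < I)%N = false by apply/negbTE; rewrite -e -leqNgt.
by rewrite e3 mul0r add0r.
Qed.

Definition rowval (v : 'cV[rat]_n) (p : 'I_I * 'I_J) : rat :=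
  gg v 0 + (p.1.+1 < I)%N%:R * gg v p.1.+1 + gg v (I + p.2).

Lemma rowvalE (v : 'cV[rat]_n) (p : 'I_I * 'I_J) :
  (design_row p.1 p.2 *m v) 0 0 = rowval v p.
Proof.
rewrite mxE /rowval /gg.
rewrite (eq_bigr (fun k => (val k == 0%N)%:R * v k 0 + (p.1.+1 < I)%N%:R * ((val k == p.1.+1)%:R * v k 0)
     + (val k == I + p.2)%N%:R * v k 0)); last first.
  by move=> k _; rewrite drowE !mulrDl mulrA.
by rewrite !big_split /= -mulr_sumr.
Qed.

Definition p0 : 'I_I * 'I_J := (Ordinal hI, Ordinal hJ).

Lemma dm_entry (F : {set 'I_I * 'I_J}) v (k : 'I_n) : #|F| = n ->
  (design_matrix F *m v) k 0 = rowval v (nth p0 (enum F) k).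
Proof.
move=> hF; rewrite -rowvalE !mxE; apply: eq_bigr => l _.
rewrite !mxE (nth_map p0); first by rewrite mxE.
by move: hF; rewrite cardE => ->.
Qed.

Lemma dm_ker (F : {set 'I_I * 'I_J}) v : #|F| = n ->
  (design_matrix F *m v = 0) <-> (forall p, p \in F -> rowval v p = 0).
Proof.
move=> hF; split => [h p pF|h].
  have hk : (index p (enum F) < n)%N by rewrite -hF cardE index_mem mem_enum.
  have := congr1 (fun M : 'cV[rat]_n => M (Ordinal hk) 0) h.
  by rewrite dm_entry //= nth_index ?mem_enum // mxE.
apply/matrixP => k z; rewrite ord1 dm_entry // mxE; apply: h.
by rewrite -mem_enum mem_nth // -cardE hF.
Qed.

Lemma conn_ker (F : {set 'I_I * 'I_J}) v :
  conn setT setT F -> (forall p, p \in F -> rowval v p = 0) -> v = 0.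
Proof.
move=> cF h.
pose P := fun i : 'I_I => gg v 0 + (i.+1 < I)%N%:R * gg v i.+1.
pose Q := fun j : 'I_J => gg v (I + j).
have hPQ : forall p, p \in F -> P p.1 = - Q p.2.
  by move=> p /h; rewrite /rowval => /eqP; rewrite addr_eq0 => /eqP.
have jl : (J.-1 < J)%N by lia.
have Ql : Q (Ordinal jl) = 0 by rewrite /Q gg_out //=; lia.
have all0 : forall i0, P i0 = 0 /\ forall j, Q j = 0.
  move=> i0.
  have := forallP (forallP cF [set i | P i == P i0]) [set j | Q j == - P i0].
  rewrite !subsetT /=.
  have -> : closedAB F [set i | P i == P i0] [set j | Q j == - P i0].
    by rewrite /closedAB; apply/forall_inP => p pF; rewrite !in_set (hPQ p pF); apply/eqP; exact: eqr_oppLR.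
  rewrite /= => /orP[/andP[/eqP e _]|/andP[_ /eqP e]].
    by move/setP: e => /(_ i0); rewrite !in_set eqxx.
  have eQ : forall j, Q j = - P i0 by move=> j; move/setP: e => /(_ j); rewrite in_setT in_set => /eqP.
  have P0 : P i0 = 0.
    by have := eQ (Ordinal jl); rewrite Ql => /eqP; rewrite eq_sym oppr_eq0 => /eqP.
  by split=> // j; rewrite eQ P0 oppr0.
have il : (I.-1 < I)%N by lia.
have g0 : gg v 0 = 0.
  have := (all0 (Ordinal il)).1; rewrite /P /= (_ : (I.-1.+1 < I)%N = false) ?mul0r ?addr0 //.
  by apply/negbTE; lia.
apply/matrixP => k z; rewrite ord1 mxE -gg_val.
have kn : (val k < n)%N := ltn_ord k.
case: (val k =P 0%N) => [->//|e].
case: (ltnP (val k) I) => kI.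
  have il2 : ((val k).-1 < I)%N by lia.
  have k0 : (0 < val k)%N by move: e; case: (val k).
  have := (all0 (Ordinal il2)).1; rewrite /P /= (prednK k0).
  by rewrite kI mul1r g0 add0r.
have jl2 : (val k - I < J)%N by lia.
by have := (all0 (Ordinal il)).2 (Ordinal jl2); rewrite /Q /= subnKC.
Qed.

Lemma gg_col (f : nat -> rat) l :
  gg (\col_(k < n) f (val k)) l = if (l < n)%N then f l else 0.
Proof.
case: ltnP => hl; last exact: gg_out.
by rewrite (gg_val _ (Ordinal hl)) mxE.
Qed.

Lemma setC0T (T : finType) (A : {set T}) : ~: A = set0 -> A = setT.
Proof. by move/setP=> e; apply/setP => x; have := e x; rewrite !inE; case: (x \in A). Qed.

Lemma nconn_ker (F : {set 'I_I * 'I_J}) :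
  ~~ conn setT setT F -> exists2 v : 'cV[rat]_n, v != 0 & (forall p, p \in F -> rowval v p = 0).
Proof.
move/forallPn => [A] /forallPn [B]; rewrite negb_imply !subsetT /= => /andP[cl nt].
have jl : (J.-1 < J)%N by clear -hJ; lia.
have [A' [B' [cl' nt' jB]]] : exists A' : {set 'I_I}, exists B' : {set 'I_J},
    [/\ closedAB F A' B', ~~ ((A' == set0) && (B' == set0)) & Ordinal jl \notin B'].
  case jB: (Ordinal jl \in B); last by exists A, B; split=> //; [move: nt; rewrite negb_or => /andP[] | rewrite jB].
  exists (~: A), (~: B); split.
  - by apply/forall_inP => p pF; rewrite !inE (eqP (forall_inP cl p pF)).
  - apply/negP => /andP[/eqP /setC0T eA /eqP /setC0T eB].
    by move: nt; rewrite eA eB !eqxx orbT.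
  - by rewrite inE jB.
pose an (l : nat) : rat := ([exists x in A', val x == l] : bool)%:R.
pose bn (l : nat) : rat := - ([exists y in B', val y == l] : bool)%:R.
have anE : forall i : 'I_I, an i = (i \in A')%:R.
  move=> i; rewrite /an; congr (_%:R); congr (nat_of_bool _); apply/idP/idP => [/exists_inP [x xA /eqP/val_inj <- //]|iA].
  by apply/exists_inP; exists i.
have bnE : forall j : 'I_J, bn j = - (j \in B')%:R.
  move=> j; rewrite /bn; congr (- _%:R); congr (nat_of_bool _); apply/idP/idP => [/exists_inP [x xA /eqP/val_inj <- //]|iA].
  by apply/exists_inP; exists j.
pose f (l : nat) : rat := if l == 0%N then an I.-1 else if (l < I)%N then an l.-1 - an I.-1 else bn (l - I)%N.
have n0 : (0 < n)%N by clear -hI hJ; lia.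
exists (\col_(k < n) f (val k)).
  apply/negP => /eqP v0.
  have fz : forall l, (l < n)%N -> f l = 0.
    move=> l hl; have := gg_col f l; rewrite hl => <-.
    by rewrite v0 /gg big1 // => k _; rewrite mxE mulr0.
  have aI : an I.-1 = 0 by have := fz 0%N n0.
  have Ai : forall i : 'I_I, an i = 0.
    move=> i; case: (ltnP i.+1 I) => hi.
      have hin : (i.+1 < n)%N by clear -hi hJ; lia.
      by have := fz i.+1 hin; rewrite /f /= hi aI subr0.
    by rewrite (_ : (i : nat) = I.-1) //; have := ltn_ord i; clear -hi; lia.
  have Bj : forall j : 'I_J, bn j = 0.
    move=> j; case: (ltnP (I + j) n) => hj.
      have := fz _ hj; rewrite /f (_ : (I + j == 0)%N = false); last by apply/negbTE; clear -hI; lia.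
      by rewrite (_ : (I + j < I)%N = false) ?addKn //; apply/negbTE; clear -hI; lia.
    have ej : j = Ordinal jl by apply/val_inj => /=; have := ltn_ord j; clear -hj; lia.
    by rewrite bnE ej (negbTE jB) oppr0.
  move: nt'; rewrite negb_and => /orP[] /negP; apply; apply/eqP/setP => x; rewrite inE;
    apply/negbTE.
    by have := Ai x; rewrite anE; case: (x \in A') => //= /eqP; rewrite oner_eq0.
  by have := Bj x; rewrite bnE; case: (x \in B') => //= /eqP; rewrite oppr_eq0 oner_eq0.
move=> [i j] pF; rewrite /rowval !gg_col /= n0.
have -> : f 0%N = an I.-1 by [].
have e1 : an I.-1 + (i.+1 < I)%N%:R * (if (i.+1 < n)%N then f i.+1 else 0) = an i.
  case: (ltnP i.+1 I) => hi.
    rewrite (_ : (i.+1 < n)%N = true); last by clear -hi hJ; lia.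
    by rewrite /f /= hi mul1r addrC subrK.
  by rewrite mul0r addr0 (_ : (i : nat) = I.-1) //; have := ltn_ord i; clear -hi; lia.
have e2 : (if (I + j < n)%N then f (I + j) else 0) = bn j.
  case: (ltnP (I + j) n) => hj.
    rewrite /f (_ : (I + j == 0)%N = false); last by apply/negbTE; clear -hI; lia.
    by rewrite (_ : (I + j < I)%N = false) ?addKn //; apply/negbTE; clear -hI; lia.
  have ej : j = Ordinal jl by apply/val_inj => /=; have := ltn_ord j; clear -hj; lia.
  by rewrite ej bnE (negbTE jB) oppr0.
rewrite e1 e2 anE bnE (eqP (forall_inP cl' _ pF)) /=.
by rewrite subrr.
Qed.

Lemma sat_conn (F : {set 'I_I * 'I_J}) : #|F| = n ->
  (design_matrix F \in unitmx) = conn setT setT F.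
Proof.
move=> hF; apply/idP/idP => [Xu|cF].
  apply/negPn/negP => /nconn_ker [v v0 hv].
  have := (unit_ker (design_matrix F)).1 Xu v ((dm_ker v hF).2 hv).
  by move=> e; move: v0; rewrite e eqxx.
apply/unit_ker => v /(dm_ker v hF) h; exact: conn_ker cF h.
Qed.

End Lin.



End LinM.
Import LinM.

Lemma card_margA I J (F : {set 'I_I * 'I_J}) : #|F| = (\sum_(i < I) marginA F i)%N.
Proof.
rewrite -sum1_card (partition_big (fun p : 'I_I * 'I_J => p.1) xpredT) //=.
apply: eq_bigr => i _; rewrite /marginA -sum1_card; apply: eq_bigl => p.
by rewrite !inE.
Qed.

Lemma multi_dvd (s : seq nat) : (\prod_(k <- s) k`! %| (\sum_(k <- s) k)`!)%N.
Proof.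
elim: s => [|k s IH]; first by rewrite !big_nil.
rewrite !big_cons -(bin_fact (leq_addr (\sum_(j <- s) j) k)) addKn.
by apply: dvdn_mull; apply: dvdn_mul.
Qed.

Lemma bigT_nat I (F : 'I_I -> nat) op idx :
  \big[op/idx]_(i in [set: 'I_I]) F i = \big[op/idx]_(i < I) F i.
Proof. by apply: eq_bigl => j; rewrite in_setT. Qed.

Lemma multinomialE n I (d : 'I_I -> nat) :
  multinomial n [seq (d j).-1 | j <- enum 'I_I] = (n`! %/ PF setT d)%N.
Proof.
by rewrite /multinomial big_map /PF big_enum /= bigT_nat.
Qed.

Lemma PF_dvd I (d : 'I_I -> nat) n : (forall j, 0 < d j)%N ->
  (\sum_(j < I) d j = n + I)%N -> (PF setT d %| n`!)%N.
Proof.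
move=> pos hs.
have := multi_dvd [seq (d j).-1 | j <- enum [set: 'I_I]].
rewrite !big_map !big_enum /= /PF bigT_nat.
have := sum_pred (C := [set: 'I_I]) (d := d) (fun j _ => pos j).
rewrite !bigT_nat cardsT card_ord hs => h.
by rewrite (_ : (\sum_(i < I) (d i).-1 = n)%N) //; lia.
Qed.

Lemma PF_gt0 I (d : 'I_I -> nat) : (0 < PF setT d)%N.
Proof. by rewrite /PF prodn_gt0 // => i; rewrite fact_gt0. Qed.

Unset Implicit Arguments.
Theorem proposition4p5 (I J : nat) (mA : 'I_I -> nat) (mB : 'I_J -> nat) :
  (2 <= I)%N -> (2 <= J)%N ->
  (forall i, (0 < mA i)%N) -> (forall j, (0 < mB j)%N) ->
  (\sum_(i < I) mA i)%N = (I + J - 1)%N ->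
  (\sum_(j < J) mB j)%N = (I + J - 1)%N ->
  #|[set F : {set 'I_I * 'I_J} | saturated F
        && [forall i, marginA F i == mA i]
        && [forall j, marginB F j == mB j]]|
  = (multinomial (I - 1) [seq (mB j).-1 | j <- enum 'I_J]
     * multinomial (J - 1) [seq (mA i).-1 | i <- enum 'I_I])%N.
Proof.
move=> I2 J2 pA pB sA sB.
have hI : (0 < I)%N by lia.
have hJ : (0 < J)%N by lia.
have eS : [set F : {set 'I_I * 'I_J} | saturated F
        && [forall i, marginA F i == mA i]
        && [forall j, marginB F j == mB j]] = [set F | good setT setT mA mB F].
  apply/setP => F; rewrite !inE /saturated /good.
  apply/idP/idP.
    case/andP => /andP[/andP[/eqP cF u] mA'] mB'; apply/and4P; split.
    - by apply/subsetP => p _; rewrite !inE.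
    - by rewrite -(sat_conn hI hJ cF).
    - by apply/forall_inP => i _; exact: forallP mA' i.
    - by apply/forall_inP => j _; exact: forallP mB' j.
  case/and4P => _ cF mA' mB'.
  have cF' : #|F| = (I + J - 1)%N.
    rewrite card_margA -sA; apply: eq_bigr => i _.
    exact/eqP/(forall_inP mA' i (in_setT i)).
  rewrite cF' eqxx (sat_conn hI hJ cF') cF /=; apply/andP; split; apply/forallP.
    by move=> i; exact: forall_inP mA' i (in_setT i).
  by move=> j; exact: forall_inP mB' j (in_setT j).
rewrite eS -/(cnt _ _ _ _).
have H : Hyp [set: 'I_I] [set: 'I_J] mA mB.
  by split; rewrite ?cardsT ?card_ord ?bigT_nat //; lia.
have := main_count (leqnn _) H; rewrite /Concl !cardsT !card_ord => E.
rewrite !multinomialE.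
have dB : (PF setT mB %| (I - 1)`!)%N by apply: PF_dvd => //; rewrite sB; lia.
have dA : (PF setT mA %| (J - 1)`!)%N by apply: PF_dvd => //; rewrite sA; lia.
apply/eqP; rewrite -(eqn_pmul2r (PF_gt0 mA)) -(eqn_pmul2r (PF_gt0 mB)).
by rewrite E -(mulnA _ _ (PF _ mA)) divnK // mulnAC divnK // mulnC.
Qed.
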